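(* Let $t_f$ be the final time of an extremal of the planar minimum-fuel problem with final constraints on energy and angular momentum modulus. Use the angles of the context and suppose that at $t_f$: (i) $\vec r=r(\cos\varphi,\sin\varphi)$, $\vec v=v(-\sin(\varphi-\gamma),\cos(\varphi-\gamma))$ with $v\neq0$ and $\cos\gamma\neq0$; (ii) for some nonzero constant $c$, $\vec p_r=c\,\omega(-\cos(\theta-\varphi),\sin(\theta-\varphi))$ and $\vec p_v=c(\sin(\theta-\varphi),\cos(\theta-\varphi))$; (iii) $\omega\, r\, v\sin(\theta-\gamma)=v_c^2\sin\theta$ with $v_c=\sqrt{\mu/r}$; (iv) the final transversality relation $(\vec p_r^{\,t}\vec r+\vec p_v^{\,t}\vec v)(\vec r^{\,t}\vec v)=(\vec p_v^{\,t}\vec r)(v^2+v_c^2)$ holds. Then $(v_c^2+\omega^2r^2)\sin\theta(t_f)=0$, hence $\sin\theta(t_f)=0$. If moreover the closed-loop relation $\sin(\gamma-\theta)=\frac{v_c}{v}\frac{\sin\theta}{\sqrt{1-3\sin^2\theta}}$ holds at $t_f$ and $\theta,\gamma\in(-\pi/2,\pi/2)$, then $\theta(t_f)=\gamma(t_f)=0$: the final point is an apside (perigee or apogee) of the targeted elliptical orbit.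
   Context: Planar motion in an Earth-centered inertial frame $(O,x,y)$. $\varphi$ is the longitude of the position measured from the $x$ axis; $\theta$ is the pitch angle (thrust direction $\vec u$) and $\gamma$ the flight path angle (velocity direction), both measured positively from the local horizontal; $\omega$ is the angular rate of $\vec u$ in the inertial frame. $\vec p_r,\vec p_v$ are the costates of position and velocity; the form (ii) and relations (iii) and the closed-loop relation for $\theta$ are properties of optimal extremals established in prior work (with $\omega=\sqrt{\mu/r^3}\,(1-3\sin^2\theta)$ and $\dot\omega=-\frac{3\mu}{r^3}\sin\theta\cos\theta$) and are taken here as hypotheses. $\mu>0$ is the gravitational constant. *)

(* Defs.v *)
From Stdlib Require Import Reals Lra.
Open Scope R_scope.

Definition vec2 := (R * R)%type.
Definition dot (u w : vec2) : R := fst u * fst w + snd u * snd w.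

(* Main.v *)
Require Import Defs.
From Stdlib Require Import Reals Lra.
Open Scope R_scope.

Lemma sin_zero_interval x : - PI / 2 < x < PI / 2 -> sin x = 0 -> x = 0.
Proof.
  intros [H1 H2] Hs.
  destruct (Rtotal_order x 0) as [Hl|[He|Hg]]; auto.
  - assert (sin x < 0). { rewrite <- (Ropp_involutive x), sin_neg.
      assert (0 < sin (- x)) by (apply sin_gt_0; lra). lra. } lra.
  - assert (0 < sin x) by (apply sin_gt_0; lra). lra.
Qed.

Theorem mainTheorem5
  (mu r v phi gamma theta omega c : R)
  (rv vv pr pv : vec2)
  (Hmu : 0 < mu) (Hr : 0 < r)
  (Homega : omega = sqrt (mu / r ^ 3) * (1 - 3 * sin theta ^ 2))
  (Hrv : rv = (r * cos phi, r * sin phi))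
  (Hvv : vv = (v * - sin (phi - gamma), v * cos (phi - gamma)))
  (Hv : v <> 0) (Hcg : cos gamma <> 0)
  (Hc : c <> 0)
  (Hpr : pr = (c * omega * - cos (theta - phi), c * omega * sin (theta - phi)))
  (Hpv : pv = (c * sin (theta - phi), c * cos (theta - phi)))
  (H3 : omega * r * v * sin (theta - gamma) = (sqrt (mu / r)) ^ 2 * sin theta)
  (H4 : (dot pr rv + dot pv vv) * dot rv vv
        = dot pv rv * (v ^ 2 + (sqrt (mu / r)) ^ 2)) :
  ((sqrt (mu / r)) ^ 2 + omega ^ 2 * r ^ 2) * sin theta = 0 /\
  sin theta = 0 /\
  ((sin (gamma - theta)
      = sqrt (mu / r) / v * (sin theta / sqrt (1 - 3 * sin theta ^ 2)) ->
    - PI / 2 < theta < PI / 2 ->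
    - PI / 2 < gamma < PI / 2 ->
    theta = 0 /\ gamma = 0)).
Proof.
  assert (D1 : dot pr rv = - c * omega * r * cos theta).
  { rewrite Hpr, Hrv; unfold dot; simpl.
    assert (E : cos theta = cos ((theta - phi) + phi)) by (f_equal; ring).
    rewrite E, cos_plus; ring. }
  assert (D2 : dot pv vv = c * v * cos (theta - gamma)).
  { rewrite Hpv, Hvv; unfold dot; simpl.
    assert (E : cos (theta - gamma) = cos ((theta - phi) + (phi - gamma))) by (f_equal; ring).
    rewrite E, cos_plus; ring. }
  assert (D3 : dot rv vv = r * v * sin gamma).
  { rewrite Hrv, Hvv; unfold dot; simpl.
    assert (E : sin gamma = sin (phi - (phi - gamma))) by (f_equal; ring).
    rewrite E, (sin_minus phi (phi - gamma)); ring. }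
  assert (D4 : dot pv rv = c * r * sin theta).
  { rewrite Hpv, Hrv; unfold dot; simpl.
    assert (E : sin theta = sin ((theta - phi) + phi)) by (f_equal; ring).
    rewrite E, sin_plus; ring. }
  rewrite D1, D2, D3, D4 in H4.
  set (vc2 := sqrt (mu / r) ^ 2) in *.
  set (s := sin (theta - gamma)) in *.
  set (k := cos (theta - gamma)) in *.
  assert (ST : sin theta = s * cos gamma + k * sin gamma).
  { unfold s, k. assert (E : sin theta = sin ((theta - gamma) + gamma)) by (f_equal; ring).
    rewrite E, sin_plus; ring. }
  assert (CT : cos theta = k * cos gamma - s * sin gamma).
  { unfold s, k. assert (E : cos theta = cos ((theta - gamma) + gamma)) by (f_equal; ring).
    rewrite E, cos_plus; ring. }
  assert (P : s ^ 2 + k ^ 2 = 1).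
  { unfold s, k. pose proof (sin2_cos2 (theta - gamma)). unfold Rsqr in H. nra. }
  assert (Key0 : c * r * v * cos gamma * (v * s + omega * r * sin theta) = 0).
  { rewrite CT in H4. rewrite ST in H4, H3 |- *.
    assert (SC : sin gamma ^ 2 + cos gamma ^ 2 = 1)
      by (pose proof (sin2_cos2 gamma) as SC; unfold Rsqr in SC; lra).
    assert (E : c * r * v * cos gamma * (v * s + omega * r * (s * cos gamma + k * sin gamma))
      = - ((- c * omega * r * (k * cos gamma - s * sin gamma) + c * v * k) * (r * v * sin gamma)
        - c * r * (s * cos gamma + k * sin gamma) * (v ^ 2 + vc2))
        + c * r * (omega * r * v * s - vc2 * (s * cos gamma + k * sin gamma))).
    { apply Rminus_diag_uniq.
      match goal with |- ?L - ?R = 0 =>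
        replace (L - R) with (c * r ^ 2 * omega * v * s * (sin gamma ^ 2 + cos gamma ^ 2 - 1)) by ring end.
      rewrite SC; ring. }
    rewrite E, H4, H3. ring. }
  assert (Key : v * s + omega * r * sin theta = 0).
  { assert (Hr' : r <> 0) by lra.
    apply Rmult_integral in Key0 as [K|K]; auto.
    repeat (apply Rmult_integral in K as [K|K]); contradiction. }
  assert (Hvc : 0 < vc2).
  { unfold vc2. rewrite pow2_sqrt. apply Rdiv_lt_0_compat; lra.
    apply Rlt_le, Rdiv_lt_0_compat; lra. }
  assert (G1 : (vc2 + omega ^ 2 * r ^ 2) * sin theta = 0).
  { replace ((vc2 + omega ^ 2 * r ^ 2) * sin theta)
      with (omega * r * (v * s + omega * r * sin theta) - (omega * r * v * s - vc2 * sin theta))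
      by ring.
    rewrite Key, H3; ring. }
  assert (G2 : sin theta = 0).
  { apply Rmult_integral in G1 as [G|G]; auto.
    assert (0 <= omega ^ 2 * r ^ 2) by (apply Rmult_le_pos; apply pow2_ge_0). lra. }
  split; [exact G1|split; [exact G2|]].
  intros HC Ht Hg.
  assert (T0 : theta = 0) by (apply sin_zero_interval; auto).
  split; auto.
  apply sin_zero_interval; auto.
  rewrite G2, T0 in HC. rewrite Rminus_0_r in HC. rewrite HC. unfold Rdiv. ring.
Qed.
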